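(* In the setting below (the $k$-graph $\Lambda$ determined by isometric intertwiners $T_e$), for all $m,n\in\mathbb N^k$ the family $$\{T_\lambda T_\mu^*:\ \lambda\in\Lambda^m,\ \mu\in\Lambda^n,\ r(\lambda)=r(\mu)=\iota,\ s(\lambda)=s(\mu)\}$$ is a basis of the vector space $\mathrm{Hom}(\rho^n,\rho^m)$, and each $T_\lambda T_\mu^*$ in it is a partial isometry.
   Context: Setting: $G$ compact group, $\rho_1,\dots,\rho_k$ finite-dimensional unitary representations on $\mathcal H_1,\dots,\mathcal H_k$; $\mathcal H^n=\mathcal H_1^{\otimes n_1}\otimes\cdots\otimes\mathcal H_k^{\otimes n_k}$, $\rho^n=\rho_1^{\otimes n_1}\otimes\cdots\otimes\rho_k^{\otimes n_k}$, tensor factors always reordered canonically via flips; $\mathrm{Hom}(\sigma,\tau)$ denotes intertwiners. Let $R$ be the set of equivalence classes of irreducible representations occurring as subrepresentations of some $\rho^n$; for $\pi\in R$ fix a representative on $\mathcal H_\pi$, and let $\iota\in R$ be the trivial representation, $\mathcal H_\iota=\mathbb C$. Let $\Lambda^0=R$ and, for each $i$, let $\Lambda^{\varepsilon_i}$ be a set of edges with $|\{e\in\Lambda^{\varepsilon_i}:s(e)=v,r(e)=w\}|=\dim\mathrm{Hom}(v,w\otimes\rho_i)$. For each $e\in\Lambda^{\varepsilon_i}$ choose an isometric intertwiner $T_e\in\mathrm{Hom}(s(e),r(e)\otimes\rho_i)$, $T_e:\mathcal H_{s(e)}\to\mathcal H_{r(e)}\otimes\mathcal H_i$, such that for every $\pi\in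 R$, $\mathcal H_\pi\otimes\mathcal H_i=\bigoplus_{e\in\Lambda^{\varepsilon_i},r(e)=\pi}T_eT_e^*(\mathcal H_\pi\otimes\mathcal H_i)$ (orthogonal sum). Assume these choices determine a $k$-graph: for all $i\ne j$ and $e\in\Lambda^{\varepsilon_i}$, $f\in\Lambda^{\varepsilon_j}$ with $s(e)=r(f)$ there is a unique pair $f'\in\Lambda^{\varepsilon_j}$, $e'\in\Lambda^{\varepsilon_i}$ with $r(f')=r(e)$, $s(f')=r(e')$, $s(e')=s(f)$ and $(T_e\otimes I_{\mathcal H_j})T_f=(T_{f'}\otimes I_{\mathcal H_i})T_{e'}$ as maps into $\mathcal H_{r(e)}\otimes\mathcal H^{\varepsilon_i+\varepsilon_j}$, and the factorization rules $ef=f'e'$ so obtained satisfy the associativity condition, so that they define a $k$-graph $\Lambda$ (row-finite, no sources) with vertices $R$ and these edges. For a path $\lambda\in\Lambda^n$ written as a composition of edges $\lambda=e_1e_2\cdots e_p$, $T_\lambda:\mathcal H_{s(\lambda)}\to\mathcal H_{r(\lambda)}\otimes\mathcal H^n$ is the composition $(T_{e_1}\otimes I)\circ\cdots\circ(T_{e_{p-1}}\otimes I)\circ T_{e_p}$ (independent of the factorization by assumption); when $r(\lambda)=\iota$ this is a map $\mathcal H_{s(\lambda)}\to\mathcal H^n$, and $\mathcal H^n=\bigoplus_{\lambda\in\iota\Lambda^n}T_\lambda T_\lambda^*(\mathcal H^n)$. *)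

(* Defs.v *)
From HB Require Import structures.
From mathcomp Require Import all_boot all_order all_algebra.
From mathcomp Require Import all_classical all_reals.
From mathcomp Require Import topology normedtype.
From mathcomp Require Import complex mxtens.
Import numFieldNormedType.Exports.

Set Implicit Arguments.
Unset Strict Implicit.
Unset Printing Implicit Defensive.

Import Order.TTheory GRing.Theory Num.Theory.
Local Open Scope ring_scope.

Section Setting.

Variable R : realType.
Local Notation C := (R[i]).

Definition adjmx m n (A : 'M[C]_(m, n)) : 'M[C]_(n, m) := (map_mx Num.conj A)^T.

Definition partial_isometry m n (A : 'M[C]_(m, n)) : Prop :=
  A *m adjmx A *m A = A.

Variable G : topologicalType.
Variables (mul : G -> G -> G) (inv : G -> G) (one : G).

Definition compact_group : Prop :=
  [/\ (forall x y z, mul x (mul y z) = mul (mul x y) z),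
      (forall x, mul one x = x),
      (forall x, mul (inv x) x = one) &
      [/\ continuous (fun p : G * G => mul p.1 p.2),
      continuous inv &
      compact [set: G]]].

(* Finite-dimensional representations on C^d (matrices act on column vectors). *)
Definition is_rep d (pi : G -> 'M[C]_d) : Prop :=
  (forall g h, pi (mul g h) = pi g *m pi h) /\ pi one = 1%:M.

Definition unitary_rep d (pi : G -> 'M[C]_d) : Prop :=
  is_rep pi /\ forall g, pi g *m adjmx (pi g) = 1%:M.

Definition continuous_rep d (pi : G -> 'M[C]_d) : Prop :=
  forall a b, continuous (fun g => complex.Re (pi g a b)) /\
              continuous (fun g => complex.Im (pi g a b)).

Definition intw n m (sig : G -> 'M[C]_n) (tau : G -> 'M[C]_m) (X : 'M[C]_(m, n)) : Prop :=
  forall g, tau g *m X = X *m sig g.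

Definition rep_equiv n m (sig : G -> 'M[C]_n) (tau : G -> 'M[C]_m) : Prop :=
  exists (X : 'M[C]_(m, n)) (Y : 'M[C]_(n, m)),
    [/\ intw sig tau X, intw tau sig Y, X *m Y = 1%:M & Y *m X = 1%:M].

Definition irreducible d (pi : G -> 'M[C]_d) : Prop :=
  (0 < d)%N /\
  forall W : {vspace 'cV[C]_d},
    (forall g w, w \in W -> pi g *m w \in W) -> W = 0%VS \/ W = fullv.

Definition hom_basis n m (sig : G -> 'M[C]_n) (tau : G -> 'M[C]_m)
    (X : seq 'M[C]_(m, n)) : Prop :=
  [/\ (forall A, A \in X -> intw sig tau A),
      (forall A, intw sig tau A -> A \in <<X>>%VS) &
      free X].

Definition hom_dim n m (sig : G -> 'M[C]_n) (tau : G -> 'M[C]_m) (d : nat) : Prop :=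
  exists X : seq 'M[C]_(m, n), size X = d /\ hom_basis sig tau X.

Variable k : nat.
Variable dh : 'I_k -> nat.
Variable rho : forall i : 'I_k, G -> 'M[C]_(dh i).

(* The list of tensor factors of H^n = H_1^{n_1} (x) ... (x) H_k^{n_k}. *)
Definition colors (m : 'I_k -> nat) : seq 'I_k :=
  flatten [seq nseq (m i) i | i <- enum 'I_k].

Definition dims (s : seq 'I_k) : nat := foldr (fun c d => (dh c * d)%N) 1%N s.

(* Kronecker product rho_{c_1} (x) ... (x) rho_{c_p} (row-major indexing,
   as for tensmx). *)
Fixpoint tens (s : seq 'I_k) : G -> 'M[C]_(dims s) :=
  match s return G -> 'M[C]_(dims s) with
  | [::] => fun _ => 1%:M
  | c :: s' => fun g => rho c g *t tens s' g
  end.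

Definition Dim (m : 'I_k -> nat) : nat := dims (colors m).
Definition rhopow (m : 'I_k -> nat) : G -> 'M[C]_(Dim m) := tens (colors m).

Definition occurs_in d (sig : G -> 'M[C]_d) (m : 'I_k -> nat) : Prop :=
  exists X : 'M[C]_(Dim m, d), intw sig (rhopow m) X /\ \rank X = d.

Variable V : Type.
Variable dim : V -> nat.
Variable pi : forall v : V, G -> 'M[C]_(dim v).
Variable iota : V.

Definition vertices_ok : Prop :=
  [/\ (forall v, [/\ unitary_rep (pi v), irreducible (pi v) &
                     exists m, occurs_in (pi v) m]),
      (forall v w, v <> w -> ~ rep_equiv (pi v) (pi w)),
      (forall d (sig : G -> 'M[C]_d), is_rep sig -> irreducible sig ->
          (exists m, occurs_in sig m) -> exists v, rep_equiv sig (pi v)),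
      dim iota = 1%N &
      (forall g, pi iota g = 1%:M)].

Variable E : eqType.
Variables (src rng : E -> V) (col : E -> 'I_k).
Variable T : forall e : E, 'M[C]_(dim (rng e) * dh (col e), dim (src e)).

(* Entry of a matrix accessed through natural-number indices (0 outside). *)
Definition nent m n (A : 'M[C]_(m, n)) (i j : nat) : C :=
  match (insub i : option 'I_m), (insub j : option 'I_n) with
  | Some i', Some j' => A i' j'
  | _, _ => 0
  end.

(* Tent e a x c = < (a (x) x) | T_e | c >, a in H_{r(e)}, x in H_{col e}, c in H_{s(e)} *)
Definition Tent (e : E) (a x c : nat) : C := nent (T e) (a * dh (col e) + x)%N c.

Definition edges_ok : Prop :=
  [/\ (forall e, adjmx (T e) *m T e = 1%:M /\
                 intw (pi (src e)) (fun g => pi (rng e) g *t rho (col e) g) (T e)),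
      (* H_v (x) H_i is the orthogonal sum of the ranges of T_e T_e^*, r(e) = v, e of colour i *)
      (forall v i, exists s : seq E,
         [/\ uniq s,
             (forall e, e \in s <-> rng e = v /\ col e = i),
             (forall e f, e \in s -> f \in s -> e <> f ->
                forall c c', (c < dim (src e))%N -> (c' < dim (src f))%N ->
                \sum_(a < dim v) \sum_(x < dh i) (Tent e a x c)^* * Tent f a x c' = 0) &
             (forall a x a' x', (a < dim v)%N -> (x < dh i)%N ->
                (a' < dim v)%N -> (x' < dh i)%N ->
                \sum_(e <- s) \sum_(c < dim (src e)) Tent e a x c * (Tent e a' x' c)^*
                  = ((a == a') && (x == x'))%:R)]) &
      (forall v w i, exists s : seq E,
         [/\ uniq s,
             (forall e, e \in s <-> [/\ src e = v, rng e = w & col e = i]) &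
             hom_dim (pi v) (fun g => pi w g *t rho i g) (size s)])].

(* The factorisation rule e f = f' e' (e, e' of one colour, f, f' of another):
   (T_e (x) I) T_f = (T_{f'} (x) I) T_{e'} after reordering tensor factors. *)
Definition fact (e f f' e' : E) : Prop :=
  [/\ col f' = col f, col e' = col e, rng f' = rng e &
    [/\ src f' = rng e', src e' = src f &
      forall a x y b, (a < dim (rng e))%N -> (x < dh (col e))%N ->
        (y < dh (col f))%N -> (b < dim (src f))%N ->
        \sum_(c < dim (src e)) Tent e a x c * Tent f c y b
        = \sum_(c < dim (src f')) Tent f' a y c * Tent e' c x b]].

Definition kgraph_ok : Prop :=
  (forall e f, col e <> col f -> src e = rng f ->
     exists f' e', fact e f f' e' /\
       forall f'' e'', fact e f f'' e'' -> f'' = f' /\ e'' = e') /\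
  (* associativity of the factorisation rules *)
  (forall e f g, col e <> col f -> col f <> col g -> col e <> col g ->
     src e = rng f -> src f = rng g ->
     forall f1 e1 g1 e2 g2 f2 g1' f1' g2' e1' f2' e2',
       fact e f f1 e1 -> fact e1 g g1 e2 -> fact f1 g1 g2 f2 ->
       fact f g g1' f1' -> fact e g1' g2' e1' -> fact e1' f1' f2' e2' ->
       [/\ g2 = g2', f2 = f2' & e2 = e2']).

(* A path lambda = e_1 e_2 ... e_p (r(lambda) = r(e_1), s(e_j) = r(e_{j+1})) *)
Fixpoint chain (v : V) (p : seq E) : Prop :=
  match p with
  | [::] => True
  | e :: p' => rng e = v /\ chain (src e) p'
  end.

Definition psrc (v : V) (p : seq E) : V := last v [seq src e | e <- p].

(* lambda in iota Lambda^m, written in its (unique) factorisation with the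
   edges of colour 1 first, then colour 2, ..., then colour k. *)
Definition iota_path (m : 'I_k -> nat) (p : seq E) : Prop :=
  [seq col e | e <- p] = colors m /\ chain iota p.

(* Tp p a X b = < a (x) X | T_p | b > where
   T_{e p'} = (T_e (x) I) T_{p'} and T_[::] = identity. *)
Fixpoint Tp (p : seq E) : nat -> nat -> nat -> C :=
  match p with
  | [::] => fun a X b => ((a == b) && (X == 0%N))%:R
  | e :: p' => fun a X b =>
      \sum_(c < dim (src e))
        Tent e a (X %/ dims [seq col e | e <- p']) c *
        Tp p' c (X %% dims [seq col e | e <- p']) b
  end.

(* T_lambda T_mu^* : H^n -> H^m, for lambda, mu with range iota *)
Definition TT (m n : 'I_k -> nat) (lam mu : seq E) : 'M[C]_(Dim m, Dim n) :=
  \matrix_(X < Dim m, Y < Dim n)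
    \sum_(b < dim (psrc iota lam)) Tp lam 0 X b * (Tp mu 0 Y b)^*.

End Setting.

(* Main.v *)
Require Import Defs.
From HB Require Import structures.
From mathcomp Require Import all_boot all_order all_algebra.
From mathcomp Require Import all_classical all_reals.
From mathcomp Require Import topology normedtype.
From mathcomp Require Import complex mxtens.
Import numFieldNormedType.Exports.
Set Implicit Arguments.
Unset Strict Implicit.
Unset Printing Implicit Defensive.
Import Order.TTheory GRing.Theory Num.Theory.
Local Open Scope ring_scope.
Section Gen.
Variable R : realType.
Local Notation C := (R[i]).

Lemma nentE m n (A : 'M[C]_(m,n)) (i : 'I_m) (j : 'I_n) : nent A i j = A i j.
Proof.
rewrite /nent; case: insubP => [i' _ Ei|]; last by move=> /negP[]; exact: ltn_ord.
case: insubP => [j' _ Ej|]; last by move=> /negP[]; exact: ltn_ord.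
by congr (A _ _); apply: val_inj.
Qed.

Lemma nent_out m n (A : 'M[C]_(m,n)) i j : (m <= i)%N || (n <= j)%N -> nent A i j = 0.
Proof.
rewrite /nent; case: insubP => [i' Hi _|//]; case: insubP => [j' Hj _|//].
by rewrite leqNgt Hi leqNgt Hj.
Qed.

Lemma nent_eq m n (A B : 'M[C]_(m,n)) :
  (forall i j, (i < m)%N -> (j < n)%N -> nent A i j = nent B i j) -> A = B.
Proof. by move=> H; apply/matrixP=> i j; rewrite -!nentE; apply: H. Qed.

Lemma nent_mul m n p (A : 'M[C]_(m,n)) (B : 'M[C]_(n,p)) i l :
  nent (A *m B) i l = \sum_(j < n) nent A i j * nent B j l.
Proof.
case: (ltnP i m) => Hi; last first.
  by rewrite nent_out ?Hi // big1 // => j _; rewrite nent_out ?Hi ?mul0r.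
case: (ltnP l p) => Hl; last first.
  by rewrite nent_out ?Hl ?orbT // big1 // => j _; rewrite (nent_out B) ?Hl ?orbT ?mulr0.
rewrite -[ i ]/(nat_of_ord (Ordinal Hi)) -[l]/(nat_of_ord (Ordinal Hl)) nentE mxE.
by apply: eq_bigr => j _; rewrite !nentE.
Qed.

Lemma nent_tens m n p q (A : 'M[C]_(m,n)) (B : 'M[C]_(p,q)) i j :
  (i < m * p)%N -> (j < n * q)%N ->
  nent (A *t B) i j = nent A (i %/ p) (j %/ q) * nent B (i %% p) (j %% q).
Proof.
move=> Hi Hj.
rewrite -[ i ]/(nat_of_ord (Ordinal Hi)) -[j]/(nat_of_ord (Ordinal Hj)) nentE mxE.
by rewrite -!nentE.
Qed.

Lemma nent1 n i j : nent (1%:M : 'M[C]_n) i j = ((i == j) && (i < n)%N)%:R.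
Proof.
case: (ltnP i n) => Hi; last by rewrite nent_out ?Hi // andbF.
case: (ltnP j n) => Hj; last first.
  rewrite nent_out ?Hj ?orbT //; case: eqP => // E; subst j.
  by move: (leq_trans Hi Hj); rewrite ltnn.
rewrite -[ i ]/(nat_of_ord (Ordinal Hi)) -[j]/(nat_of_ord (Ordinal Hj)) nentE mxE.
by rewrite -val_eqE /= andbT.
Qed.

Lemma nent_adj m n (A : 'M[C]_(m,n)) i j : nent (adjmx A) i j = (nent A j i)^*.
Proof.
case: (ltnP i n) => Hi; last by rewrite !nent_out ?Hi ?orbT // conjC0.
case: (ltnP j m) => Hj; last by rewrite !nent_out ?Hj ?orbT // conjC0.
rewrite -[ i ]/(nat_of_ord (Ordinal Hi)) -[j]/(nat_of_ord (Ordinal Hj)) !nentE.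
by rewrite /adjmx !mxE.
Qed.

Lemma nent_scale m n (A : 'M[C]_(m,n)) c i j : nent (c *: A) i j = c * nent A i j.
Proof.
case: (ltnP i m) => Hi; last by rewrite !nent_out ?Hi // mulr0.
case: (ltnP j n) => Hj; last by rewrite !nent_out ?Hj ?orbT // mulr0.
by rewrite -[ i ]/(nat_of_ord (Ordinal Hi)) -[j]/(nat_of_ord (Ordinal Hj)) !nentE mxE.
Qed.

Lemma nent_add m n (A B : 'M[C]_(m,n)) i j : nent (A + B) i j = nent A i j + nent B i j.
Proof.
case: (ltnP i m) => Hi; last by rewrite !nent_out ?Hi // addr0.
case: (ltnP j n) => Hj; last by rewrite !nent_out ?Hj ?orbT // addr0.
by rewrite -[ i ]/(nat_of_ord (Ordinal Hi)) -[j]/(nat_of_ord (Ordinal Hj)) !nentE mxE.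
Qed.

Lemma nent_sum m n (I : Type) (r : seq I) (P : pred I) (F : I -> 'M[C]_(m,n)) i j :
  nent (\sum_(x <- r | P x) F x) i j = \sum_(x <- r | P x) nent (F x) i j.
Proof.
case: (ltnP i m) => Hi; last by rewrite nent_out ?Hi // big1 // => x _; rewrite nent_out ?Hi.
case: (ltnP j n) => Hj; last by rewrite nent_out ?Hj ?orbT // big1 // => x _; rewrite nent_out ?Hj ?orbT.
rewrite -[ i ]/(nat_of_ord (Ordinal Hi)) -[j]/(nat_of_ord (Ordinal Hj)) !nentE summxE.
by apply: eq_bigr => x _; rewrite nentE.
Qed.

Lemma nent0 m n i j : nent (0 : 'M[C]_(m,n)) i j = 0.
Proof.
case: (ltnP i m) => Hi; last by rewrite !nent_out ?Hi.
case: (ltnP j n) => Hj; last by rewrite !nent_out ?Hj ?orbT.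
by rewrite -[ i ]/(nat_of_ord (Ordinal Hi)) -[j]/(nat_of_ord (Ordinal Hj)) !nentE mxE.
Qed.

Lemma sum_split (F : nat -> C) m n :
  \sum_(X < m * n) F X = \sum_(x < m) \sum_(y < n) F (x * n + y)%N.
Proof.
elim: m => [|m IH]; first by rewrite mul0n !big_ord0.
by rewrite mulSnr big_split_ord IH big_ord_recr.
Qed.

Lemma adjmxK m n (A : 'M[C]_(m,n)) : adjmx (adjmx A) = A.
Proof. by apply/matrixP=> i j; rewrite /adjmx !mxE conjCK. Qed.

Lemma adjmxM m n p (A : 'M[C]_(m,n)) (B : 'M[C]_(n,p)) :
  adjmx (A *m B) = adjmx B *m adjmx A.
Proof.
apply/matrixP=> i j; rewrite /adjmx !mxE rmorph_sum; apply: eq_bigr => l _.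
by rewrite !mxE rmorphM mulrC.
Qed.

Lemma adjmx1 n : adjmx (1%:M : 'M[C]_n) = 1%:M.
Proof. by apply/matrixP=> i j; rewrite /adjmx !mxE eq_sym rmorph_nat. Qed.

Lemma adjmxZ m n (A : 'M[C]_(m,n)) c : adjmx (c *: A) = c^* *: adjmx A.
Proof. by apply/matrixP=> i j; rewrite /adjmx !mxE rmorphM. Qed.

Lemma adjmx0 m n : adjmx (0 : 'M[C]_(m,n)) = 0.
Proof. by apply/matrixP=> i j; rewrite /adjmx !mxE conjC0. Qed.

Lemma adjmx_tens m n p q (A : 'M[C]_(m,n)) (B : 'M[C]_(p,q)) :
  adjmx (A *t B) = adjmx A *t adjmx B.
Proof. by apply/matrixP=> i j; rewrite /adjmx !mxE rmorphM. Qed.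

Lemma tens11 m n : (1%:M : 'M[C]_m) *t (1%:M : 'M[C]_n) = 1%:M.
Proof.
apply/matrixP=> i j; case: (mxtens_indexP i) => i1 i2; case: (mxtens_indexP j) => j1 j2.
rewrite tensmxE !mxE -natrM mulnb; congr (_%:R).
by rewrite (inj_eq (can_inj (@mxtens_indexK m n))) xpair_eqE.
Qed.

End Gen.
Section Schur.
Variable R : realType.
Local Notation C := (R[i]).
Variable G : topologicalType.
Variables (mul : G -> G -> G) (one : G).

Lemma intw_comp n m p (P : G -> 'M[C]_n) (Q : G -> 'M[C]_m) (S : G -> 'M[C]_p) X Y :
  intw P Q X -> intw Q S Y -> intw P S (Y *m X).
Proof. by move=> HX HY g; rewrite mulmxA HY -mulmxA HX mulmxA. Qed.

Lemma unit_adj d (P : G -> 'M[C]_d) g :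
  unitary_rep mul one P -> adjmx (P g) *m P g = 1%:M.
Proof. by case=> _ H; apply: mulmx1C; apply: H. Qed.

Lemma intw_adj n m (P : G -> 'M[C]_n) (Q : G -> 'M[C]_m) X :
  unitary_rep mul one P -> unitary_rep mul one Q -> intw P Q X -> intw Q P (adjmx X).
Proof.
move=> HP HQ HX g.
have E : adjmx X *m adjmx (Q g) = adjmx (P g) *m adjmx X by rewrite -!adjmxM HX.
rewrite -[LHS]mulmx1 -(unit_adj g HQ) mulmxA -(mulmxA _ (adjmx X)) E.
by rewrite !mulmxA (proj2 HP g) mul1mx.
Qed.

Lemma schur_endo d (P : G -> 'M[C]_d) (A : 'M[C]_d) :
  irreducible P -> intw P P A -> exists c, A = c%:M.
Proof.
case=> Hd Hirr HA.
have [c Hc] : exists c, eigenvalue A^T c.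
  have : size (char_poly A^T) != 1%N by rewrite size_char_poly; case: (d) Hd.
  by move/closed_rootP => [c Hc]; exists c; rewrite eigenvalue_root_char.
exists c.
move/eigenvalueP: Hc => [v Hv Hv0].
pose B := A - c%:M.
have HB : forall g, B *m P g = P g *m B.
  by move=> g; rewrite /B mulmxBl mulmxBr -HA scalar_mxC.
pose W := lker (linfun (mulmx B : 'cV[C]_d -> 'cV[C]_d)).
have memW w : (w \in W) = (B *m w == 0) by rewrite memv_ker lfunE.
have : W = 0%VS \/ W = fullv.
  apply: Hirr => g w; rewrite !memW => /eqP Hw.
  by rewrite mulmxA HB -mulmxA Hw mulmx0.
case=> HW.
  have : v^T \in W.
    rewrite memW.
    have -> : B *m v^T = (v *m B^T)^T by rewrite trmx_mul trmxK.
    have -> : B^T = A^T - c%:M by rewrite /B linearB /= tr_scalar_mx.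
    by rewrite mulmxBr Hv mul_mx_scalar subrr trmx0.
  rewrite HW memv0 => /eqP /(congr1 trmx); rewrite trmxK trmx0 => E.
  by move: Hv0; rewrite E eqxx.
have B0 : B = 0.
  apply/matrixP=> a b; rewrite mxE.
  have : delta_mx b (0 : 'I_1) \in W by rewrite HW memvf.
  rewrite memW -colE => /eqP /matrixP /(_ a 0).
  by rewrite !mxE.
by apply/eqP; rewrite -subr_eq0 -/B B0.
Qed.

Lemma adj_mul_diag m n (X : 'M[C]_(m,n)) j : (adjmx X *m X) j j = \sum_(a < m) (X a j)^* * X a j.
Proof. by rewrite mxE; apply: eq_bigr => a _; rewrite /adjmx !mxE. Qed.

Lemma schur_neq n m (P : G -> 'M[C]_n) (Q : G -> 'M[C]_m) (X : 'M[C]_(m,n)) :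
  unitary_rep mul one P -> unitary_rep mul one Q -> irreducible P -> irreducible Q ->
  intw P Q X -> X != 0 -> rep_equiv P Q.
Proof.
move=> uP uQ iP iQ HX X0.
have HY := intw_adj uP uQ HX.
have [c Hc] := schur_endo iP (intw_comp HX HY).
have [c' Hc'] := schur_endo iQ (intw_comp HY HX).
have [a [b Hab]] : exists a b, X a b != 0.
  case: (boolP [exists a, exists b, X a b != 0]) => [/existsP[a /existsP[b Hab]]|H].
    by exists a, b.
  exfalso; move/negP: X0; apply; apply/eqP/matrixP=> a b; rewrite mxE; apply/eqP/negPn.
  by move: H; rewrite negb_exists => /forallP/(_ a); rewrite negb_exists => /forallP/(_ b).
have c0 : c != 0.
  apply: contraNneq Hab => c0.
  have Hs : \sum_(a' < m) (X a' b)^* * X a' b = 0.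
    by rewrite -adj_mul_diag Hc mxE eqxx c0 mulr1n.
  have := psumr_eq0P (fun i _ => _) Hs (i:=a) isT.
  move=> /(_ _) H; apply/eqP.
  have : (X a b)^* * X a b = 0 by apply: H => i; rewrite -normCKC exprn_ge0 ?normr_ge0.
  by move/eqP; rewrite mulf_eq0 conjC_eq0 orbb => /eqP.
have cc : c = c'.
  have : X *m (adjmx X *m X) = (X *m adjmx X) *m X by rewrite mulmxA.
  rewrite Hc Hc' mul_mx_scalar mul_scalar_mx => /matrixP /(_ a b); rewrite !mxE.
  by move/(mulIf Hab).
exists X, (c^-1 *: adjmx X); split => //.
- by move=> g; rewrite -scalemxAr HY scalemxAl.
- by rewrite -scalemxAr Hc' -cc scale_scalar_mx mulVf.
- by rewrite -scalemxAl Hc scale_scalar_mx mulVf.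
Qed.
End Schur.
From mathcomp Require Import ring.
Section Rearr.
Variable R : realType.
Local Notation C := (R[i]).

Lemma R1 (na nx ny nc nc' : nat) (A A' : nat -> nat -> nat -> C) (B B' : nat -> nat -> C) :
 \sum_(a < na) \sum_(x < nx) \sum_(y < ny)
    (\sum_(c < nc) A a x c * B c y)^* * (\sum_(c < nc') A' a x c * B' c y)
 = \sum_(c < nc) \sum_(c' < nc') (\sum_(a < na) \sum_(x < nx) (A a x c)^* * A' a x c')
        * (\sum_(y < ny) (B c y)^* * B' c' y).
Proof.
transitivity (\sum_(a < na) \sum_(x < nx) \sum_(y < ny) \sum_(c < nc) \sum_(c' < nc')
   ((A a x c)^* * A' a x c') * ((B c y)^* * B' c' y)).
  apply: eq_bigr => a _; apply: eq_bigr => x _; apply: eq_bigr => y _.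
  rewrite rmorph_sum big_distrlr /=; apply: eq_bigr => c _; apply: eq_bigr => c' _.
  by rewrite rmorphM /=; ring.
symmetry.
transitivity (\sum_(c < nc) \sum_(c' < nc') \sum_(a < na) \sum_(x < nx) \sum_(y < ny)
   ((A a x c)^* * A' a x c') * ((B c y)^* * B' c' y)).
  apply: eq_bigr => c _; apply: eq_bigr => c' _.
  rewrite mulr_suml; apply: eq_bigr => a _; rewrite mulr_suml; apply: eq_bigr => x _.
  by rewrite mulr_sumr.
under eq_bigr => c _.
  under eq_bigr => c' _.
    under eq_bigr => a _ do rewrite exchange_big.
    rewrite exchange_big.
    under eq_bigr => x _ do rewrite exchange_big.
    rewrite exchange_big.
    over.
  rewrite exchange_big.
  under eq_bigr => y _ do rewrite exchange_big.
  rewrite exchange_big.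
  under eq_bigr => x _.
    under eq_bigr => y _ do rewrite exchange_big.
    rewrite exchange_big.
    over.
  rewrite exchange_big.
  over.
rewrite exchange_big.
under eq_bigr => a _ do rewrite exchange_big.
under eq_bigr => a _.
  under eq_bigr => x _ do rewrite exchange_big.
  over.
by under eq_bigr => a _ do rewrite exchange_big.
Qed.

Lemma R2 (I : Type) (L : seq I) (nb : I -> nat) (nc : nat) (al al' : nat -> C)
  (B B' : I -> nat -> nat -> C) :
 \sum_(p <- L) \sum_(b < nb p) (\sum_(c < nc) al c * B p c b) * (\sum_(c < nc) al' c * B' p c b)^*
 = \sum_(c < nc) \sum_(c' < nc) (al c * (al' c')^*) *
     (\sum_(p <- L) \sum_(b < nb p) B p c b * (B' p c' b)^*).
Proof.
transitivity (\sum_(p <- L) \sum_(b < nb p) \sum_(c < nc) \sum_(c' < nc)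
   (al c * (al' c')^*) * (B p c b * (B' p c' b)^*)).
  apply: eq_bigr => p _; apply: eq_bigr => b _.
  rewrite rmorph_sum big_distrlr /=; apply: eq_bigr => c _; apply: eq_bigr => c' _.
  by rewrite rmorphM /=; ring.
symmetry.
transitivity (\sum_(c < nc) \sum_(c' < nc) \sum_(p <- L) \sum_(b < nb p)
   (al c * (al' c')^*) * (B p c b * (B' p c' b)^*)).
  apply: eq_bigr => c _; apply: eq_bigr => c' _.
  rewrite mulr_sumr; apply: eq_bigr => p _; by rewrite mulr_sumr.
under eq_bigr => c _ do rewrite exchange_big.
rewrite exchange_big; apply: eq_bigr => p _.
under eq_bigr => c _ do rewrite exchange_big.
by rewrite exchange_big.
Qed.

Lemma R3 (na nx ny nc : nat) (P Q S : nat -> C) (A : nat -> nat -> nat -> C) (B : nat -> nat -> C) :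
 \sum_(a < na) \sum_(x < nx) \sum_(y < ny) (P a * Q x * S y) * (\sum_(c < nc) A a x c * B c y)
 = \sum_(c < nc) (\sum_(a < na) \sum_(x < nx) P a * Q x * A a x c) * (\sum_(y < ny) S y * B c y).
Proof.
transitivity (\sum_(a < na) \sum_(x < nx) \sum_(y < ny) \sum_(c < nc)
   (P a * Q x * A a x c) * (S y * B c y)).
  apply: eq_bigr => a _; apply: eq_bigr => x _; apply: eq_bigr => y _.
  rewrite mulr_sumr; apply: eq_bigr => c _; ring.
symmetry.
transitivity (\sum_(c < nc) \sum_(a < na) \sum_(x < nx) \sum_(y < ny)
   (P a * Q x * A a x c) * (S y * B c y)).
  apply: eq_bigr => c _; rewrite mulr_suml; apply: eq_bigr => a _.
  rewrite mulr_suml; apply: eq_bigr => x _; by rewrite mulr_sumr.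
rewrite exchange_big; apply: eq_bigr => a _.
rewrite exchange_big; apply: eq_bigr => x _.
by rewrite exchange_big.
Qed.

Lemma R4 (nc nc' : nat) (f Z : nat -> C) (g : nat -> nat -> C) :
  \sum_(c < nc) (\sum_(c' < nc') f c' * g c' c) * Z c
  = \sum_(c' < nc') f c' * (\sum_(c < nc) g c' c * Z c).
Proof.
under eq_bigr => c _ do rewrite mulr_suml.
rewrite exchange_big; apply: eq_bigr => c' _; rewrite mulr_sumr.
by apply: eq_bigr => c _; rewrite mulrA.
Qed.

Lemma R5 (nc nb : nat) (f w : nat -> C) (h : nat -> nat -> C) :
  \sum_(c < nc) f c * (\sum_(b < nb) h c b * w b)
  = \sum_(b < nb) (\sum_(c < nc) f c * h c b) * w b.
Proof.
under eq_bigr => c _ do rewrite mulr_sumr.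
rewrite exchange_big; apply: eq_bigr => b _; rewrite mulr_suml.
by apply: eq_bigr => c _; rewrite mulrA.
Qed.

Lemma sum_delta n c (F : nat -> C) : (c < n)%N ->
  \sum_(c' < n) ((c == c' :> nat)%:R * F c') = F c.
Proof.
move=> Hc; rewrite (bigD1 (Ordinal Hc)) //= eqxx mul1r big1 ?addr0 // => j Hj.
have -> : (c == j :> nat) = false by apply/negP => /eqP E; move: Hj; rewrite -val_eqE /= E eqxx.
by rewrite mul0r.
Qed.

Lemma sum_delta' n c (F : nat -> C) : (c < n)%N ->
  \sum_(c' < n) (F c' * (c' == c :> nat)%:R) = F c.
Proof.
move=> Hc; rewrite -(sum_delta F Hc); apply: eq_bigr => j _; by rewrite mulrC eq_sym.
Qed.

End Rearr.
Lemma ltn_mix a x m n : (a < m)%N -> (x < n)%N -> (a * n + x < m * n)%N.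
Proof. by move=> Ha Hx; exact: (mxtens_index_proof (Ordinal Ha, Ordinal Hx)). Qed.
Lemma div_mix a x n : (x < n)%N -> ((a * n + x) %/ n = a)%N.
Proof. by move=> Hx; rewrite divnMDl ?divn_small ?addn0 //; case: n Hx. Qed.
Lemma mod_mix a x n : (x < n)%N -> ((a * n + x) %% n = x)%N.
Proof. by move=> Hx; rewrite modnMDl modn_small. Qed.

Lemma sum_split2 (R : realType) m n (F : 'I_(m * n) -> R[i]) :
  \sum_(X < m * n) F X = \sum_(x < m) \sum_(y < n) F (mxtens_index (x, y)).
Proof.
have bij : bijective (@mxtens_index m n).
  by exists (@mxtens_unindex m n); [apply: mxtens_indexK | apply: mxtens_unindexK].
rewrite pair_big (reindex _ (onW_bij _ bij)) /=.
by apply: eq_bigr => -[x y] _.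
Qed.

Section Paths.
Variable R : realType.
Local Notation C := (R[i]).
Variable G : topologicalType.
Variable k : nat.
Variable dh : 'I_k -> nat.
Variable rho : forall i : 'I_k, G -> 'M[C]_(dh i).
Variable V : Type.
Variable dim : V -> nat.
Variable pi : forall v : V, G -> 'M[C]_(dim v).
Variable E : eqType.
Variables (src rng : E -> V) (col : E -> 'I_k).
Variable T : forall e : E, 'M[C]_(dim (rng e) * dh (col e), dim (src e)).
Hypothesis HE : edges_ok rho pi T.

Local Notation TP := (Tp T).
Local Notation TE := (Tent T).
Local Notation CH := (chain src rng).
Local Notation PS := (psrc src).
Local Notation DM := (dims dh).

Lemma dimsE c s : DM (c :: s) = (dh c * DM s)%N.
Proof. by []. Qed.

Lemma Tp_van p : forall v a X b, (a < dim v)%N -> (dim (PS v p) <= b)%N -> TP p a X b = 0.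
Proof.
elim: p => [|e p IH] v a X b Ha Hb /=.
  case: eqP => [Eb|//]; subst b; by move: (leq_trans Ha Hb); rewrite ltnn.
by rewrite big1 // => c _; rewrite (IH (src e)) ?mulr0.
Qed.

Lemma Tp_cons e p a x y b d : d = DM (map col p) -> (y < d)%N ->
  TP (e :: p) a (x * d + y) b = \sum_(c < dim (src e)) TE e a x c * TP p c y b.
Proof. by move=> -> Hy /=; rewrite div_mix // mod_mix. Qed.

Lemma HT1 e c c' : (c < dim (src e))%N -> (c' < dim (src e))%N ->
  \sum_(a < dim (rng e)) \sum_(x < dh (col e)) (TE e a x c)^* * TE e a x c' = (c == c')%:R.
Proof.
move=> Hc Hc'; case: HE => H1 _ _.
have := congr1 (fun M => nent M c c') (H1 e).1; rewrite /= nent_mul nent1 Hc andbT => <-.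
rewrite (sum_split (fun j => nent (adjmx (T e)) c j * nent (T e) j c')).
by apply: eq_bigr => a _; apply: eq_bigr => x _; rewrite nent_adj.
Qed.

Lemma Hdec v i : exists s : seq E,
         [/\ uniq s,
             (forall e, e \in s <-> rng e = v /\ col e = i),
             (forall e f, e \in s -> f \in s -> e <> f ->
                forall c c', (c < dim (src e))%N -> (c' < dim (src f))%N ->
                \sum_(a < dim v) \sum_(x < dh i) (TE e a x c)^* * TE f a x c' = 0) &
             (forall a x a' x', (a < dim v)%N -> (x < dh i)%N ->
                (a' < dim v)%N -> (x' < dh i)%N ->
                \sum_(e <- s) \sum_(c < dim (src e)) TE e a x c * (TE e a' x' c)^*
                  = ((a == a') && (x == x'))%:R)].
Proof. by case: HE => _ H _; apply: H. Qed.

Definition Ledge v i : seq E := proj1_sig (cid (Hdec v i)).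
Definition LedgeP v i := proj2_sig (cid (Hdec v i)).

Lemma HT_orth e f c c' : e <> f -> rng e = rng f -> col e = col f ->
  (c < dim (src e))%N -> (c' < dim (src f))%N ->
  \sum_(a < dim (rng e)) \sum_(x < dh (col e)) (TE e a x c)^* * TE f a x c' = 0.
Proof.
move=> ef Hr Hc Hce Hcf; have [_ Hm Ho _] := LedgeP (rng e) (col e).
by apply: Ho => //; apply/Hm.
Qed.

Lemma Tp_orth p : forall v q b b', CH v p -> CH v q -> map col p = map col q ->
   (b < dim (PS v p))%N -> (b' < dim (PS v q))%N ->
   \sum_(a < dim v) \sum_(X < DM (map col p)) (TP p a X b)^* * TP q a X b'
     = ((p == q) && (b == b'))%:R.
Proof.
elim: p => [|e p IH] v [|f q] b b' //=.
  move=> _ _ _ Hb Hb'.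
  transitivity (\sum_(a < dim v) ((b == a :> nat)%:R * (a == b' :> nat)%:R : C)).
    apply: eq_bigr => a _; rewrite big_ord1 /= !andbT conjC_nat.
    by congr (_ * _); rewrite eq_sym.
  exact: (sum_delta (fun a => (a == b')%:R) Hb).
move=> [Hv Hp] [Hw Hq] [Hc Hcol] Hb Hb'; subst v.
rewrite -Hcol.
under eq_bigr => a _ do rewrite sum_split2 /=.
transitivity (\sum_(a < dim (rng e)) \sum_(x < dh (col e)) \sum_(y < DM (map col p))
   (\sum_(c < dim (src e)) TE e a x c * TP p c y b)^* *
   (\sum_(c < dim (src f)) TE f a x c * TP q c y b')).
  apply: eq_bigr => a _; apply: eq_bigr => x _; apply: eq_bigr => y _.
  by rewrite !div_mix ?mod_mix.
rewrite (R1 _ _ _ _ _ (fun a x c => TE e a x c) (fun a x c => TE f a x c)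
  (fun c y => TP p c y b) (fun c y => TP q c y b')).
case: (eqVneq e f) => [ef|nef].
  subst f; rewrite eqseq_cons eqxx /=.
  transitivity (\sum_(c < dim (src e)) \sum_(c' < dim (src e))
    (c == c' :> nat)%:R * \sum_(y < DM (map col p)) (TP p c y b)^* * TP q c' y b').
    by apply: eq_bigr => c _; apply: eq_bigr => c' _; rewrite HT1.
  under eq_bigr => c _ do rewrite (sum_delta (fun c' => \sum_(y < DM (map col p)) (TP p c y b)^* * TP q c' y b')) //.
  by rewrite (IH (src e) q b b').
rewrite big1; last first.
  move=> c _; rewrite big1 // => c' _.
  by rewrite (HT_orth (e:=e) (f:=f)) ?mul0r //; apply/eqP.
by rewrite eqseq_cons (negbTE nef).
Qed.

Fixpoint Lch (s : seq 'I_k) (v : V) : seq (seq E) :=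
  match s with
  | [::] => [:: [::]]
  | i :: s' => [seq e :: p | e <- Ledge v i, p <- Lch s' (src e)]
  end.

Lemma Lch_mem s : forall v p, p \in Lch s v <-> CH v p /\ map col p = s.
Proof.
elim: s => [|i s IH] v p /=.
  rewrite inE; split; first by move/eqP->.
  by case: p => [|e p] // [_].
have [_ Hm _ _] := LedgeP v i.
split.
  move/allpairsPdep => [e [p' [He Hp' ->]]].
  have [Hr Hc] := (Hm e).1 He.
  have [Hch Hcol] := (IH (src e) p').1 Hp'.
  by rewrite /= Hr Hc Hcol.
case: p => [|e p] /=; first by move=> [_].
move=> [[Hr Hch] [Hc Hcol]].
apply/allpairsPdep; exists e, p; split => //; first exact/Hm.
exact/IH.
Qed.

Lemma Lch_uniq s : forall v, uniq (Lch s v).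
Proof.
elim: s => [|i s IH] v //=.
apply: allpairs_uniq_dep => //.
- by have [] := LedgeP v i.
- by move=> [e1 p1] [e2 p2] _ _ /= [<- <-].
Qed.

Lemma HT_intw e g a x c : (a < dim (rng e))%N -> (x < dh (col e))%N -> (c < dim (src e))%N ->
  \sum_(a' < dim (rng e)) \sum_(x' < dh (col e))
     nent (pi (rng e) g) a a' * nent (rho (col e) g) x x' * TE e a' x' c
  = \sum_(c' < dim (src e)) TE e a x c' * nent (pi (src e) g) c' c.
Proof.
move=> Ha Hx Hc; case: HE => H1 _ _.
have := congr1 (fun M => nent M (a * dh (col e) + x) c) ((H1 e).2 g).
rewrite /= !nent_mul => Heq.
rewrite /TE /Tent -Heq sum_split2 /=; apply: eq_bigr => a' _; apply: eq_bigr => x' _.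
rewrite nent_tens ?ltn_mix // !div_mix // !mod_mix //.
Qed.

Lemma Tp_compl s : forall v a a' X X', (a < dim v)%N -> (a' < dim v)%N ->
  (X < DM s)%N -> (X' < DM s)%N ->
  \sum_(p <- Lch s v) \sum_(b < dim (PS v p)) TP p a X b * (TP p a' X' b)^*
   = ((a == a') && (X == X'))%:R.
Proof.
elim: s => [|i s IH] v a a' X X' Ha Ha' HX HX' /=.
  move: HX HX'; rewrite /dims /= !ltnS !leqn0 => /eqP-> /eqP->.
  rewrite big_seq1 /= andbT.
  transitivity (\sum_(b < dim v) ((a == b :> nat)%:R * ((a' == b :> nat)%:R : C))).
    by apply: eq_bigr => b _; rewrite !andbT conjC_nat.
  by rewrite (sum_delta (fun b => (a' == b)%:R) Ha) eq_sym.
set d := DM s.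
have d0 : (0 < d)%N by move: HX; rewrite /d /=; case: (DM s) => //; rewrite muln0.
have Hx : (X %/ d < dh i)%N by rewrite ltn_divLR.
have Hx' : (X' %/ d < dh i)%N by rewrite ltn_divLR.
have Hy : (X %% d < d)%N by rewrite ltn_mod.
have Hy' : (X' %% d < d)%N by rewrite ltn_mod.
have HXX : (X == X') = ((X %/ d)%N == (X' %/ d)%N) && ((X %% d)%N == (X' %% d)%N).
  by rewrite -xpair_eqE -(eq_addl_mul (X %/ d) (X' %/ d) Hy Hy') -!divn_eq.
rewrite big_allpairs_dep /=.
transitivity (\sum_(e <- Ledge v i) \sum_(c < dim (src e)) \sum_(c' < dim (src e))
   (TE e a (X %/ d) c * (TE e a' (X' %/ d) c')^*) *
   ((c == c' :> nat) && ((X %% d)%N == (X' %% d)%N))%:R).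
  apply: eq_bigr => e _.
  transitivity (\sum_(p <- Lch s (src e)) \sum_(b < dim (PS (src e) p))
    (\sum_(c < dim (src e)) TE e a (X %/ d) c * TP p c (X %% d) b) *
    (\sum_(c < dim (src e)) TE e a' (X' %/ d) c * TP p c (X' %% d) b)^*).
    rewrite big_seq [RHS]big_seq; apply: eq_bigr => p Hp.
    have [_ Hcol] := (Lch_mem s (src e) p).1 Hp.
    by apply: eq_bigr => b _ /=; rewrite Hcol.
  rewrite (R2 _ _ _ (fun c => TE e a (X %/ d) c) (fun c => TE e a' (X' %/ d) c)
     (fun p c b => TP p c (X %% d) b) (fun p c b => TP p c (X' %% d) b)).
  by apply: eq_bigr => c _; apply: eq_bigr => c' _; rewrite IH.
transitivity (\sum_(e <- Ledge v i) \sum_(c < dim (src e))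
   (TE e a (X %/ d) c * (TE e a' (X' %/ d) c)^*) * ((X %% d)%N == (X' %% d)%N)%:R).
  apply: eq_bigr => e _; apply: eq_bigr => c _.
  rewrite -(sum_delta' (fun c' => (TE e a (X %/ d) c * (TE e a' (X' %/ d) c')^*) *
         ((X %% d)%N == (X' %% d)%N)%:R) (ltn_ord c)).
  apply: eq_bigr => c' _; rewrite -mulnb natrM.
  have -> : (c' == c :> nat) = (c == c' :> nat) by rewrite eq_sym.
  ring.
have [_ _ _ Hc] := LedgeP v i.
under eq_bigr => e _ do rewrite -mulr_suml.
by rewrite -mulr_suml Hc // -natrM mulnb HXX andbA.
Qed.
Lemma Tp_intw p : forall v g a X b, CH v p -> (a < dim v)%N -> (X < DM (map col p))%N ->
  (b < dim (PS v p))%N ->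
  \sum_(a' < dim v) \sum_(X' < DM (map col p))
     nent (pi v g) a a' * nent (tens rho (map col p) g) X X' * TP p a' X' b
  = \sum_(b' < dim (PS v p)) TP p a X b' * nent (pi (PS v p) g) b' b.
Proof.
elim: p => [|e p IH] v g a X b /=.
  move=> _ Ha; rewrite /dims /= ltnS leqn0 => /eqP -> Hb.
  transitivity (\sum_(a' < dim v) nent (pi v g) a a' * (a' == b :> nat)%:R).
    by apply: eq_bigr => a' _; rewrite big_ord1 nent1 /= !andbT mulr1.
  rewrite (sum_delta' (fun a' => nent (pi v g) a a') Hb).
  rewrite -(sum_delta (fun b' => nent (pi v g) b' b) Ha).
  by apply: eq_bigr => b' _; rewrite andbT.
move=> [Hv Hch] Ha HX Hb; subst v.
have d0 : (0 < DM (map col p))%N by move: HX; case: (DM (map col p)) => //; rewrite muln0.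
have Hx : (X %/ DM (map col p) < dh (col e))%N by rewrite ltn_divLR.
have Hy : (X %% DM (map col p) < DM (map col p))%N by rewrite ltn_mod.
transitivity (\sum_(a' < dim (rng e)) \sum_(x' < dh (col e)) \sum_(y' < DM (map col p))
   (nent (pi (rng e) g) a a' * nent (rho (col e) g) (X %/ DM (map col p)) x' *
    nent (tens rho (map col p) g) (X %% DM (map col p)) y') *
   (\sum_(c < dim (src e)) TE e a' x' c * TP p c y' b)).
  apply: eq_bigr => a' _; rewrite sum_split2 /=; apply: eq_bigr => x' _; apply: eq_bigr => y' _.
  by rewrite nent_tens ?ltn_mix // !div_mix // !mod_mix // !mulrA.
rewrite (R3 _ _ _ _ (nent (pi (rng e) g) a) (nent (rho (col e) g) (X %/ DM (map col p)))
   (nent (tens rho (map col p) g) (X %% DM (map col p))) (fun a x c => TE e a x c)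
   (fun c y => TP p c y b)).
transitivity (\sum_(c < dim (src e))
   (\sum_(c' < dim (src e)) TE e a (X %/ DM (map col p)) c' * nent (pi (src e) g) c' c) *
   (\sum_(y' < DM (map col p)) nent (tens rho (map col p) g) (X %% DM (map col p)) y' * TP p c y' b)).
  by apply: eq_bigr => c _; rewrite HT_intw.
rewrite (R4 _ _ (fun c' => TE e a (X %/ DM (map col p)) c')
  (fun c => \sum_(y' < DM (map col p)) nent (tens rho (map col p) g) (X %% DM (map col p)) y' * TP p c y' b)
  (fun c' c => nent (pi (src e) g) c' c)).
transitivity (\sum_(c' < dim (src e)) TE e a (X %/ DM (map col p)) c' *
   \sum_(b' < dim (PS (src e) p)) TP p c' (X %% DM (map col p)) b' * nent (pi (PS (src e) p) g) b' b).
  apply: eq_bigr => c' _; congr (_ * _); rewrite -IH //.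
  apply: eq_bigr => c _; rewrite mulr_sumr; apply: eq_bigr => y _; by rewrite mulrA.
rewrite (R5 _ _ (fun c' => TE e a (X %/ DM (map col p)) c')
  (fun b' => nent (pi (PS (src e) p) g) b' b) (fun c' b' => TP p c' (X %% DM (map col p)) b')).
done.
Qed.
End Paths.

Section Main.
Variable R : realType.
Local Notation C := (R[i]).
Variable G : topologicalType.
Variables (mul : G -> G -> G) (one : G).
Variable k : nat.
Variable dh : 'I_k -> nat.
Variable rho : forall i : 'I_k, G -> 'M[C]_(dh i).
Variable V : Type.
Variable dim : V -> nat.
Variable pi : forall v : V, G -> 'M[C]_(dim v).
Variable iota : V.
Variable E : eqType.
Variables (src rng : E -> V) (col : E -> 'I_k).
Variable T : forall e : E, 'M[C]_(dim (rng e) * dh (col e), dim (src e)).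
Hypothesis Hrho : forall i, unitary_rep mul one (rho i) /\ continuous_rep (rho i).
Hypothesis HV : vertices_ok mul one rho pi iota.
Hypothesis HE : edges_ok rho pi T.

Local Notation TP := (Tp T).
Local Notation CH := (chain src rng).
Local Notation PS := (psrc src).
Local Notation DM := (dims dh).
Local Notation L cs := (Lch HE cs iota).

Lemma dim_iota : dim iota = 1%N.
Proof. by case: HV. Qed.
Lemma pi_iota g : pi iota g = 1%:M.
Proof. by case: HV. Qed.

Definition Tm cs (p : seq E) d : 'M[C]_(DM cs, d) := \matrix_(X < DM cs, b < d) TP p 0 X b.

Lemma nent_Tm cs p d X b : (X < DM cs)%N -> (b < d)%N -> nent (Tm cs p d) X b = TP p 0 X b.
Proof.
move=> HX Hb.
by rewrite -[X]/(nat_of_ord (Ordinal HX)) -[b]/(nat_of_ord (Ordinal Hb)) nentE mxE.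
Qed.

Lemma MO cs lam mu d d' : lam \in L cs -> mu \in L cs ->
  adjmx (Tm cs lam d) *m Tm cs mu d' =
  \matrix_(b < d, b' < d') ((lam == mu) && (b == b' :> nat) && (b < dim (PS iota lam))%N)%:R.
Proof.
move=> /Lch_mem [Hl Hcl] /Lch_mem [Hm Hcm].
apply/matrixP => b b'; rewrite !mxE.
have -> : \sum_(X < DM cs) adjmx (Tm cs lam d) b X * Tm cs mu d' X b'
  = \sum_(a < dim iota) \sum_(X < DM (map col lam)) (TP lam a X b)^* * TP mu a X b'.
  rewrite dim_iota big_ord1 Hcl; apply: eq_bigr => X _.
  by rewrite /adjmx !mxE.
have Hi0 : (0 < dim iota)%N by rewrite dim_iota.
case: (ltnP b (dim (PS iota lam))) => Hb; last first.
  rewrite andbF big1 // => a _; rewrite big1 // => X _.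
  by rewrite (Tp_van T (v:=iota)) ?conjC0 ?mul0r // dim_iota.
case: (ltnP b' (dim (PS iota mu))) => Hb'; last first.
  rewrite big1; last first.
    move=> a _; rewrite big1 // => X _.
    by rewrite (Tp_van T (v:=iota) (p:=mu)) ?mulr0 // dim_iota.
  case: (lam =P mu) => [El|//]; case: (@eqP nat b b') => [Eb|]; last by rewrite andbF.
  by rewrite El Eb in Hb; move: (leq_trans Hb Hb'); rewrite ltnn.
rewrite (Tp_orth HE (v:=iota) (q:=mu)) //; last by rewrite Hcl Hcm.
by rewrite andbT.
Qed.

Lemma MC cs : \sum_(p <- L cs) Tm cs p (dim (PS iota p)) *m adjmx (Tm cs p (dim (PS iota p)))
  = 1%:M.
Proof.
apply: nent_eq => X X' HX HX'.
rewrite nent_sum nent1 HX andbT.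
have Hi0 : (0 < dim iota)%N by rewrite dim_iota.
rewrite -[(X == X')]/(((0 == 0)%N && (X == X'))) -(Tp_compl HE (s:=cs) (v:=iota)) //.
apply: eq_bigr => p _; rewrite nent_mul; apply: eq_bigr => b _.
by rewrite nent_adj !nent_Tm.
Qed.

Lemma tens_unit s g : tens rho s g *m adjmx (tens rho s g) = 1%:M.
Proof.
elim: s => [|c s IH] /=; first by rewrite adjmx1 mulmx1.
rewrite adjmx_tens tensmx_mul IH (proj2 (proj1 (Hrho c)) g).
exact: tens11.
Qed.

Lemma MI cs p g : p \in L cs ->
  tens rho cs g *m Tm cs p (dim (PS iota p)) = Tm cs p (dim (PS iota p)) *m pi (PS iota p) g.
Proof.
move=> /Lch_mem [Hch Hcol].
apply: nent_eq => X b HX Hb.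
rewrite !nent_mul.
have Hi0 : (0 < dim iota)%N by rewrite dim_iota.
transitivity (\sum_(a' < dim iota) \sum_(X' < DM (map col p))
     nent (pi iota g) 0 a' * nent (tens rho (map col p) g) X X' * TP p a' X' b).
  rewrite pi_iota.
  transitivity (\sum_(a' < dim iota) ((0 == a' :> nat)%:R *
     \sum_(X' < DM (map col p)) nent (tens rho (map col p) g) X X' * TP p a' X' b)).
    rewrite (sum_delta (fun a' => \sum_(X' < DM (map col p))
       nent (tens rho (map col p) g) X X' * TP p a' X' b) Hi0) Hcol.
    by apply: eq_bigr => X' _; rewrite nent_Tm.
  apply: eq_bigr => a' _; rewrite mulr_sumr; apply: eq_bigr => X' _.
  by rewrite nent1 Hi0 andbT mulrA.
rewrite (Tp_intw HE) // ?Hcol //.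
by apply: eq_bigr => b' _; rewrite nent_Tm // Hcol.
Qed.

Lemma TT_eq m n lam mu :
  TT iota T m n lam mu = Tm (colors m) lam (dim (PS iota lam)) *m
                         adjmx (Tm (colors n) mu (dim (PS iota lam))).
Proof.
apply/matrixP => X Y; rewrite !mxE; apply: eq_bigr => b _.
by rewrite /adjmx !mxE.
Qed.

Lemma intw_adj' n m (P : G -> 'M[C]_n) (Q : G -> 'M[C]_m) X :
  (forall g, P g *m adjmx (P g) = 1%:M) -> (forall g, Q g *m adjmx (Q g) = 1%:M) ->
  intw P Q X -> intw Q P (adjmx X).
Proof.
move=> HP HQ HX g.
have E1 : adjmx X *m adjmx (Q g) = adjmx (P g) *m adjmx X by rewrite -!adjmxM HX.
have HQ' : adjmx (Q g) *m Q g = 1%:M by apply: mulmx1C; apply: HQ.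
rewrite -[LHS]mulmx1 -HQ' mulmxA -(mulmxA _ (adjmx X)) E1.
by rewrite !mulmxA HP mul1mx.
Qed.

Lemma pi_unit v g : pi v g *m adjmx (pi v g) = 1%:M.
Proof. by case: HV => H _ _ _ _; case: (H v) => [[_ U] _ _]; apply: U. Qed.

Lemma MIadj cs p g : p \in L cs ->
  pi (PS iota p) g *m adjmx (Tm cs p (dim (PS iota p)))
  = adjmx (Tm cs p (dim (PS iota p))) *m tens rho cs g.
Proof.
move=> Hp.
have := @intw_adj' _ _ (pi (PS iota p)) (tens rho cs) (Tm cs p (dim (PS iota p)))
  (@pi_unit _) (@tens_unit cs).
by apply => // h; apply: MI.
Qed.

Lemma irr_v v : irreducible (pi v).
Proof. by case: HV => H _ _ _ _; case: (H v). Qed.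

Lemma unit_v v : unitary_rep mul one (pi v).
Proof. by case: HV => H _ _ _ _; case: (H v). Qed.

Lemma dim_pos v : (0 < dim v)%N.
Proof. by case: (irr_v v). Qed.

Lemma schur_eq v w (X : 'M[C]_(dim v, dim w)) : v = w -> intw (pi w) (pi v) X ->
  exists c, forall i j, nent X i j = c * ((i == j) && (i < dim v))%N%:R.
Proof.
move=> Evw; subst w => HX.
have [c Hc] := schur_endo (irr_v v) HX.
by exists c => i j; rewrite Hc -scalemx1 nent_scale nent1.
Qed.

Lemma schur_ne v w (X : 'M[C]_(dim v, dim w)) : v <> w -> intw (pi w) (pi v) X -> X = 0.
Proof.
move=> Hvw HX; apply/eqP; apply/negPn/negP => X0.
have := schur_neq (unit_v w) (unit_v v) (irr_v w) (irr_v v) HX X0.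
by case: HV => _ H _ _ _; apply: H => Ewv; apply: Hvw.
Qed.
Definition Sp m n : seq (seq E * seq E) :=
  [seq q <- [seq (l, u) | l <- L (colors m), u <- L (colors n)] | `[< PS iota q.1 = PS iota q.2 >]].

Lemma Sp_mem m n q : q \in Sp m n <->
  [/\ q.1 \in L (colors m), q.2 \in L (colors n) & PS iota q.1 = PS iota q.2].
Proof.
rewrite mem_filter; split.
  case/andP => /asboolP H /allpairsP [[l u] [Hl Hu Eq]].
  by subst q; split.
case=> Hl Hu H; apply/andP; split; first exact/asboolP.
by apply/allpairsP; exists q; split => //; case: q {Hl Hu H}.
Qed.

Lemma Sp_uniq m n : uniq (Sp m n).
Proof.
apply: filter_uniq; apply: allpairs_uniq; try exact: Lch_uniq.
by move=> [? ?] [? ?] _ _ /= [-> ->].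
Qed.

Lemma TT_intw m n l u : l \in L (colors m) -> u \in L (colors n) -> PS iota l = PS iota u ->
  intw (rhopow rho n) (rhopow rho m) (TT iota T m n l u).
Proof.
move=> Hl Hu Heq g; rewrite TT_eq /rhopow.
rewrite mulmxA MI // -!mulmxA; congr (_ *m _).
by rewrite Heq; apply: MIadj.
Qed.

Lemma MOn cs lam mu d d' b c : lam \in L cs -> mu \in L cs -> (b < d)%N -> (c < d')%N ->
  nent (adjmx (Tm cs lam d) *m Tm cs mu d') b c =
  ((lam == mu) && (b == c) && (b < dim (PS iota lam))%N)%:R.
Proof.
move=> Hl Hm Hb Hc; rewrite MO //.
by rewrite -[b]/(nat_of_ord (Ordinal Hb)) -[c]/(nat_of_ord (Ordinal Hc)) nentE mxE.
Qed.

Lemma MO1 cs lam d : lam \in L cs -> d = dim (PS iota lam) ->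
  adjmx (Tm cs lam d) *m Tm cs lam d = 1%:M.
Proof.
move=> Hl Hd; rewrite MO //; apply/matrixP => b b'; rewrite !mxE eqxx /=.
have Hb : (b < dim (PS iota lam))%N by rewrite -Hd ltn_ord.
by rewrite Hb andbT.
Qed.

Lemma TT_pi m n l u : l \in L (colors m) -> u \in L (colors n) -> PS iota l = PS iota u ->
  partial_isometry (TT iota T m n l u).
Proof.
move=> Hl Hu Heq; rewrite /partial_isometry TT_eq adjmxM adjmxK.
have H1 := MO1 Hl (erefl (dim (PS iota l))).
have H2 : adjmx (Tm (colors n) u (dim (PS iota l))) *m Tm (colors n) u (dim (PS iota l)) = 1%:M.
  by apply: MO1 => //; rewrite Heq.
rewrite !mulmxA -(mulmxA _ _ (Tm (colors n) u _)) H2 mulmx1.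
by rewrite -(mulmxA _ _ (Tm (colors m) l _)) H1 mulmx1.
Qed.
Local Notation Tl cs p := (Tm cs p (dim (PS iota p))).

Lemma TT_span m n A : intw (rhopow rho n) (rhopow rho m) A ->
  A \in <<[seq TT iota T m n q.1 q.2 | q <- Sp m n]>>%VS.
Proof.
move=> HA.
have E1 : A = (\sum_(l <- L (colors m)) Tl (colors m) l *m adjmx (Tl (colors m) l)) *m A *m
              (\sum_(u <- L (colors n)) Tl (colors n) u *m adjmx (Tl (colors n) u)).
  by rewrite !MC mul1mx mulmx1.
rewrite E1 !mulmx_suml big_seq; apply: memv_suml => l Hl.
rewrite mulmx_sumr big_seq; apply: memv_suml => u Hu.
set B := adjmx (Tl (colors m) l) *m A *m Tl (colors n) u.
have ET : Tl (colors m) l *m adjmx (Tl (colors m) l) *m A *m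
          (Tl (colors n) u *m adjmx (Tl (colors n) u))
          = Tl (colors m) l *m B *m adjmx (Tl (colors n) u) by rewrite /B !mulmxA.
rewrite ET.
have HB : intw (pi (PS iota u)) (pi (PS iota l)) B.
  move=> g; rewrite /B !mulmxA MIadj // -(mulmxA (adjmx _) _ A).
  have HA' := HA g; rewrite /rhopow in HA'; rewrite HA' !mulmxA.
  by rewrite -(mulmxA _ _ (Tl (colors n) u)) MI // mulmxA.
case: (pselect (PS iota l = PS iota u)) => Heq; last first.
  by rewrite (schur_ne Heq HB) mulmx0 mul0mx; exact: mem0v.
have [c Hc] := schur_eq Heq HB.
have -> : Tl (colors m) l *m B *m adjmx (Tl (colors n) u) = c *: TT iota T m n l u.
  apply: nent_eq => X Y HX HY.
  rewrite nent_scale nent_mul.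
  transitivity (\sum_(b' < dim (PS iota u)) (c * TP l 0 X b') * (TP u 0 Y b')^*).
    apply: eq_bigr => b' _; rewrite nent_mul nent_adj nent_Tm //; congr (_ * _).
    have Hb' : (b' < dim (PS iota l))%N by rewrite Heq.
    transitivity (\sum_(b < dim (PS iota l)) (TP l 0 X b * c) * (b == b' :> nat)%:R).
      by apply: eq_bigr => b _; rewrite nent_Tm // Hc ltn_ord andbT mulrA.
    by rewrite (sum_delta' (fun b => TP l 0 X b * c) Hb') mulrC.
  rewrite TT_eq nent_mul mulr_sumr -Heq.
  by apply: eq_bigr => b _; rewrite nent_adj !nent_Tm // mulrA.
apply: memvZ; apply: memv_span; apply/mapP; exists (l, u) => //.
by apply/Sp_mem.
Qed.
Lemma pair_eq2 (A B : eqType) (x y : A * B) : ((y.1 == x.1) && (x.2 == y.2)) = (x == y).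
Proof. by case: x => a b; case: y => a' b'; rewrite xpair_eqE /= eq_sym. Qed.

Lemma key_free m n l0 u0 l u : l0 \in L (colors m) -> u0 \in L (colors n) ->
  l \in L (colors m) -> u \in L (colors n) -> PS iota l = PS iota u ->
  nent (adjmx (Tl (colors m) l0) *m TT iota T m n l u *m Tl (colors n) u0) 0 0
  = ((l0 == l) && (u == u0))%:R.
Proof.
move=> Hl0 Hu0 Hl Hu Heq.
rewrite TT_eq !mulmxA -(mulmxA _ (adjmx _) (Tl (colors n) u0)) nent_mul.
have P0 := dim_pos (PS iota l).
rewrite (bigD1 (Ordinal P0)) //= big1 ?addr0; last first.
  move=> c Hc; rewrite MOn ?dim_pos //.
  have -> : (0 == c :> nat) = false.
    by apply/negP => /eqP E0; move: Hc; rewrite -val_eqE /= -E0 eqxx.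
  by rewrite andbF mul0r.
rewrite !MOn ?dim_pos //= !andbT.
by rewrite -natrM mulnb.
Qed.

Lemma TT_free m n : free [seq TT iota T m n q.1 q.2 | q <- Sp m n].
Proof.
set S := Sp m n.
apply/(@freeP _ _ _ (in_tuple [seq TT iota T m n q.1 q.2 | q <- S])) => kk Hk j.
have Hj : (j < size S)%N by rewrite -(size_map (fun q => TT iota T m n q.1 q.2)) ltn_ord.
set q := nth ([::], [::]) S j.
have Hq : q \in S by apply: mem_nth.
have [Hl Hu Heq] := (Sp_mem m n q).1 Hq.
have := congr1 (fun M => nent (adjmx (Tl (colors m) q.1) *m M *m Tl (colors n) q.2) 0 0) Hk.
rewrite /= mulmx_sumr mulmx_suml nent_sum mulmx0 mul0mx nent0.
have Hi : forall i : 'I_(size [seq TT iota T m n q.1 q.2 | q <- S]),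
  nent (adjmx (Tl (colors m) q.1) *m (kk i *: [seq TT iota T m n q.1 q.2 | q <- S]`_i)
        *m Tl (colors n) q.2) 0 0 = kk i * (nth ([::], [::]) S i == q)%:R.
  move=> i.
  have Hi' : (i < size S)%N by rewrite -(size_map (fun q => TT iota T m n q.1 q.2)) ltn_ord.
  rewrite -scalemxAr -scalemxAl nent_scale (nth_map ([::], [::])) //.
  have Hqi : nth ([::], [::]) S i \in S by apply: mem_nth.
  have [Hli Hui Heqi] := (Sp_mem m n _).1 Hqi.
  by rewrite key_free // pair_eq2.
under eq_bigr => i _ do rewrite Hi.
rewrite (bigD1 j) //= eqxx mulr1 big1 ?addr0 //.
move=> i Hij.
have Hi' : (i < size S)%N by rewrite -(size_map (fun q => TT iota T m n q.1 q.2)) ltn_ord.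
rewrite /q nth_uniq ?Sp_uniq //.
have -> : (i == j :> nat) = false by apply/negP => /eqP E0; move: Hij; rewrite -val_eqE /= E0 eqxx.
by rewrite mulr0.
Qed.
Lemma main_result m n : exists s : seq (seq E * seq E),
    [/\ uniq s,
        (forall q, q \in s <->
           [/\ iota_path iota src rng col m q.1, iota_path iota src rng col n q.2
             & psrc src iota q.1 = psrc src iota q.2]),
        hom_basis (rhopow rho n) (rhopow rho m)
          [seq TT iota T m n q.1 q.2 | q <- s] &
        (forall q, q \in s -> partial_isometry (TT iota T m n q.1 q.2))].
Proof.
exists (Sp m n); split.
- exact: Sp_uniq.
- move=> q; split.
    move=> /Sp_mem [/Lch_mem [c1 m1] /Lch_mem [c2 m2] H].
    by rewrite /iota_path.
  rewrite /iota_path; move=> [[m1 c1] [m2 c2] H]; apply/Sp_mem.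
  by split => //; apply/Lch_mem.
- split.
  + move=> A /mapP [q Hq ->]; have [H1 H2 H3] := (Sp_mem m n q).1 Hq.
    exact: TT_intw.
  + move=> A HA; exact: TT_span.
  + exact: TT_free.
- move=> q /Sp_mem [H1 H2 H3]; exact: TT_pi.
Qed.
End Main.

Theorem proposition4p2
  (R : realType) (G : topologicalType)
  (mul : G -> G -> G) (inv : G -> G) (one : G)
  (k : nat) (dh : 'I_k -> nat) (rho : forall i : 'I_k, G -> 'M[R[i]]_(dh i))
  (V : Type) (dim : V -> nat) (pi : forall v : V, G -> 'M[R[i]]_(dim v)) (iota : V)
  (E : eqType) (src rng : E -> V) (col : E -> 'I_k)
  (T : forall e : E, 'M[R[i]]_(dim (rng e) * dh (col e), dim (src e))) :
  compact_group mul inv one ->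
  (forall i, unitary_rep mul one (rho i) /\ continuous_rep (rho i)) ->
  vertices_ok mul one rho pi iota ->
  edges_ok rho pi T ->
  kgraph_ok T ->
  forall m n : 'I_k -> nat,
  exists s : seq (seq E * seq E),
    [/\ uniq s,
        (forall q, q \in s <->
           [/\ iota_path iota src rng col m q.1, iota_path iota src rng col n q.2
             & psrc src iota q.1 = psrc src iota q.2]),
        hom_basis (rhopow rho n) (rhopow rho m)
          [seq TT iota T m n q.1 q.2 | q <- s] &
        (forall q, q \in s -> partial_isometry (TT iota T m n q.1 q.2))].
Proof.
move=> _ Hrho HV HE _ m n.
exact: (main_result Hrho HV HE m n).
Qed.
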